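(* Let $T\in\mathcal{B}\subseteq B(\mathcal{F})$ be a band-limited operator such that either $[T,R_j^*]\in\mathcal{S}$ for all $1\le j\le d$, or $[T,R_j]\in\mathcal{S}$ for all $1\le j\le d$. Then $T\in\mathcal{C}=C^*(L_1,\ldots,L_d)$.
   Context: $d\ge2$; $\xi_1,\ldots,\xi_d$ is the standard orthonormal basis of $\mathbb{C}^d$. $\mathcal{F}=\bigoplus_{n\ge0}\mathcal{F}_n$ is the full Fock space, $\mathcal{F}_0=\mathbb{C}\Omega$, $\mathcal{F}_n=(\mathbb{C}^d)^{\otimes n}$ with the usual inner product. $L_j,R_j$ are the left and right creation operators: $L_j\eta=\xi_j\otimes\eta$, $R_j\eta=\eta\otimes\xi_j$ (with $L_j\Omega=R_j\Omega=\xi_j$). An operator $T\in B(\mathcal{F})$ is band-limited if there is $b\ge0$ with $T(\mathcal{F}_n)\subseteq\bigoplus_{m\ge0,|m-n|\le b}\mathcal{F}_m$ for all $n$; $\mathcal{B}$ is the set of band-limited operators. A band-limited $T$ is summable if $\sum_{n\ge0}\|T|_{\mathcal{F}_n}\|<\infty$, where $T|_{\mathcal{F}_n}$ is the restriction of $T$ to $\mathcal{F}_n$; $\mathcal{S}$ is the set of summable band-limited operators. *)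

(* Defs.v *)
From HB Require Import structures.
From mathcomp Require Import all_boot all_order all_algebra.
From mathcomp Require Import complex.
From mathcomp Require Import reals.
Set Implicit Arguments.
Unset Strict Implicit.
Unset Printing Implicit Defensive.
Import Order.TTheory GRing.Theory Num.Theory.
Local Open Scope ring_scope.

Section Fock.
Variables (R : realType) (d : nat).

Definition C := R[i].
(* words over the alphabet {0,..,d-1}: basis xi_{w_1} ⊗ ... ⊗ xi_{w_n} of F_n;
   the empty word is the vacuum Omega *)
Definition word := seq 'I_d.
(* vectors of the full Fock space are coefficient functions on words *)
Definition vec := word -> C.
Definition op := vec -> vec.

Definition normsq (z : C) : R := (complex.Re z) ^+ 2 + (complex.Im z) ^+ 2.

(* squared norm of the F_n-component *)
Definition layer (n : nat) (f : vec) : R :=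
  \sum_(t : n.-tuple 'I_d) normsq (f (tval t)).
Definition partial (N : nat) (f : vec) : R := \sum_(n < N) layer n f.

(* sqbound f M  <->  ||f||^2 <= M *)
Definition sqbound (f : vec) (M : R) : Prop := forall N, partial N f <= M.
Definition is_l2 (f : vec) : Prop := exists M, sqbound f M.

(* ||T f||^2 <= c ||f||^2 *)
Definition normsq_le (g f : vec) (c : R) : Prop :=
  forall M, sqbound f M -> sqbound g (c * M).

(* T is (the representative of) an element of B(F) *)
Definition bounded_op (T : op) : Prop :=
  (forall f, is_l2 f -> is_l2 (T f)) /\
  (forall (a : C) f g, is_l2 f -> is_l2 g ->
      T (fun w => a * f w + g w) = (fun w => a * T f w + T g w)) /\
  exists c : R, forall f, is_l2 f -> normsq_le (T f) f c.

Definition op_add (A B : op) : op := fun f w => A f w + B f w.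
Definition op_sub (A B : op) : op := fun f w => A f w - B f w.
Definition op_scale (a : C) (A : op) : op := fun f w => a * A f w.
Definition op_comp (A B : op) : op := fun f => A (B f).
Definition commutator (A B : op) : op := op_sub (op_comp A B) (op_comp B A).

(* L_j eta = xi_j ⊗ eta *)
Definition Lcr (j : 'I_d) : op := fun f w =>
  match w with j' :: w' => if j' == j then f w' else 0 | [::] => 0 end.
Definition Lcr_adj (j : 'I_d) : op := fun f w => f (j :: w).
(* R_j eta = eta ⊗ xi_j *)
Definition Rcr (j : 'I_d) : op := fun f w =>
  match w with
  | [::] => 0
  | x :: w' => if last x w' == j then f (belast x w') else 0
  end.
Definition Rcr_adj (j : 'I_d) : op := fun f w => f (rcons w j).

Definition in_layer (n : nat) (f : vec) : Prop :=
  forall w, size w != n -> f w = 0.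

Definition band_limited (T : op) : Prop :=
  bounded_op T /\
  exists b : nat, forall n f, is_l2 f -> in_layer n f ->
    forall w, ((size w + b < n) || (n + b < size w))%N -> T f w = 0.

(* the set S of summable band-limited operators:
   sum_n ||T|_{F_n}|| < oo, written with explicit bounds c n >= ||T|_{F_n}|| *)
Definition summable_op (T : op) : Prop :=
  band_limited T /\
  exists c : nat -> R,
    (forall n, 0 <= c n) /\
    (exists K : R, forall N, \sum_(n < N) c n <= K) /\
    (forall n f, is_l2 f -> in_layer n f -> normsq_le (T f) f (c n ^+ 2)).

(* the *-algebra generated by L_1, ..., L_d (closed under adjoints since it
   contains the L_j and L_j^* and is closed under +, scalars, products) *)
Inductive star_alg_L : op -> Prop :=
  | sa_L j : star_alg_L (Lcr j)
  | sa_Ladj j : star_alg_L (Lcr_adj j)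
  | sa_add A B : star_alg_L A -> star_alg_L B -> star_alg_L (op_add A B)
  | sa_scale a A : star_alg_L A -> star_alg_L (op_scale a A)
  | sa_comp A B : star_alg_L A -> star_alg_L B -> star_alg_L (op_comp A B).

(* T ∈ C = C*(L_1,...,L_d): the operator-norm closure of the above *)
Definition in_Cuntz_Toeplitz (T : op) : Prop :=
  bounded_op T /\
  forall eps : R, 0 < eps -> exists A, star_alg_L A /\
    forall f, is_l2 f -> normsq_le (op_sub T A f) f eps.

End Fock.

(* Main.v *)
Require Import Defs.
From mathcomp Require Import all_boot all_order all_algebra.
From mathcomp Require Import complex reals.
From mathcomp Require Import ring lra zify.
From Stdlib Require Import FunctionalExtensionality Classical ClassicalEpsilon.
Import Order.TTheory GRing.Theory Num.Theory.
Local Open Scope ring_scope.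
Set Implicit Arguments. Unset Strict Implicit. Unset Printing Implicit Defensive.

Lemma normsq_ge0 (R : realType) (z : C R) : 0 <= normsq z.
Proof. rewrite /normsq; apply: addr_ge0; apply: sqr_ge0. Qed.

Lemma normsq_eq0 (R : realType) (z : C R) : normsq z = 0 -> z = 0.
Proof.
case: z => a b; rewrite /normsq /= => /eqP.
rewrite paddr_eq0; [|apply: sqr_ge0|apply: sqr_ge0]; rewrite !sqrf_eq0 => /andP[/eqP-> /eqP->]; reflexivity.
Qed.

Lemma normsq0 (R : realType) : normsq (0 : C R) = 0.
Proof. by rewrite /normsq /= expr0n /= addr0. Qed.

Lemma normsqN (R : realType) (z : C R) : normsq (- z) = normsq z.
Proof. by case: z => a b; rewrite /normsq /= !sqrrN. Qed.

Lemma normsqB (R : realType) (x y : C R) : normsq (x - y) = normsq (y - x).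
Proof. by rewrite -normsqN opprB. Qed.

Lemma normsq_addt (R : realType) (x y : C R) (t : R) : 0 < t ->
  normsq (x + y) <= (1 + t) * normsq x + (1 + t^-1) * normsq y.
Proof.
case: x => a b; case: y => c e; rewrite /normsq /= => t0.
have h1 : forall u v : R, (u + v)^+2 <= (1 + t) * u^+2 + (1 + t^-1) * v^+2.
  move=> u v.
  have ti : t * t^-1 = 1 by rewrite mulfV // gt_eqF.
  have : 0 <= t^-1 * (t * u - v)^+2.
    by apply: mulr_ge0; [rewrite invr_ge0 ltW | apply: sqr_ge0].
  have -> : t^-1 * (t * u - v)^+2 = t * u^+2 - 2 * u * v + t^-1 * v^+2.
    rewrite !expr2; rewrite !mulrA; rewrite ![t^-1 * _ * _]mulrC.
    set s := t^-1. have ts : s * t = 1 by rewrite mulrC.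
    transitivity ((t * s) * t * u * u - 2 * (t * s) * u * v + s * v * v); last by rewrite ti; ring.
    ring.
  move=> h; rewrite !expr2; rewrite !expr2 in h; lra.
have := h1 a c; have := h1 b e; lra.
Qed.

Lemma normsq_sum_le (R : realType) (I : Type) (s : seq I) (z : I -> C R) :
  normsq (\sum_(i <- s) z i) <= (size s)%:R * \sum_(i <- s) normsq (z i).
Proof.
elim: s => [|i s IH]; first by rewrite !big_nil normsq0 mulr0.
rewrite !big_cons /=.
have [s0|sn] := eqVneq (size s) 0%N.
  move: s0; case: s IH => // _ _; rewrite !big_nil !addr0 /=.
  by rewrite mul1r.
have np : 0 < (size s)%:R :> R by rewrite ltr0n lt0n.
apply: le_trans (normsq_addt _ _ np) _.
have h0 := normsq_ge0 (z i).
have e : (1 + (size s)%:R^-1) * ((size s)%:R * \sum_(j <- s) normsq (z j))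
   = ((size s).+1)%:R * \sum_(j <- s) normsq (z j) :> R.
  rewrite mulrSr mulrDl mul1r mulrA mulVf ?gt_eqF // mul1r; ring.
have := ler_wpM2l _ IH. move=> /(_ (1 + (size s)%:R^-1)) h.
have hh : 0 <= 1 + (size s)%:R^-1 :> R by rewrite addr_ge0 // invr_ge0 ltW.
move: (h hh); rewrite e => h2.
rewrite mulrSr; lra.
Qed.

Lemma partial_ge0 (R : realType) (d : nat) M (f : vec R d) : 0 <= partial M f.
Proof. rewrite /partial /layer; apply: sumr_ge0 => n _; apply: sumr_ge0 => t _; exact: normsq_ge0. Qed.

Lemma layer_ge0 (R : realType) (d : nat) n (f : vec R d) : 0 <= layer n f.
Proof. rewrite /layer; apply: sumr_ge0 => t _; exact: normsq_ge0. Qed.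

Lemma partial_addt (R : realType) (d : nat) M (x y : vec R d) (t : R) : 0 < t ->
  partial M (fun w => x w + y w) <= (1 + t) * partial M x + (1 + t^-1) * partial M y.
Proof.
move=> t0; rewrite /partial /layer !mulr_sumr -big_split /=.
apply: ler_sum => n _; rewrite !mulr_sumr -big_split /=.
apply: ler_sum => s _; exact: normsq_addt.
Qed.

Lemma partial_zero (R : realType) (d : nat) M (x y : vec R d) :
  partial M x <= 0 -> partial M (fun w => x w + y w) = partial M y.
Proof.
move=> h.
have e : partial M x = 0 by apply/eqP; rewrite eq_le h partial_ge0.
have e1 := psumr_eq0P (fun n _ => layer_ge0 (nat_of_ord n) x) e.
rewrite /partial; apply: eq_bigr => n _; rewrite /layer; apply: eq_bigr => s _.
have e2 := psumr_eq0P (fun s _ => normsq_ge0 (x (tval s))) (e1 n isT).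
by rewrite (normsq_eq0 (e2 s isT)) add0r.
Qed.

Lemma partial_mink (R : realType) (d : nat) M (x y : vec R d) (c1 c2 G : R) :
  0 <= c1 -> 0 <= c2 -> 0 <= G ->
  partial M x <= c1^+2 * G -> partial M y <= c2^+2 * G ->
  partial M (fun w => x w + y w) <= (c1 + c2)^+2 * G.
Proof.
move=> h1 h2 hG hx hy.
have [c10|c1p] := eqVneq c1 0.
  rewrite partial_zero; last by move: hx; rewrite c10 expr0n /= mul0r.
  by rewrite c10 add0r.
have [c20|c2p] := eqVneq c2 0.
  have -> : (fun w => x w + y w) = (fun w => y w + x w).
    by apply: functional_extensionality => w; rewrite addrC.
  rewrite partial_zero; last by move: hy; rewrite c20 expr0n /= mul0r.
  by rewrite c20 addr0.
have c1q : 0 < c1 by rewrite lt_def c1p h1.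
have c2q : 0 < c2 by rewrite lt_def c2p h2.
have tq : 0 < c2 / c1 by rewrite divr_gt0.
apply: le_trans (partial_addt _ _ _ tq) _.
have a1 : 0 <= 1 + c2 / c1 by rewrite addr_ge0 // ltW.
have a2 : 0 <= 1 + (c2 / c1)^-1 by rewrite addr_ge0 // invr_ge0 ltW.
apply: le_trans (lerD (ler_wpM2l a1 hx) (ler_wpM2l a2 hy)) _.
rewrite invf_div.
have -> : (1 + c2 / c1) * (c1 ^+ 2 * G) + (1 + c1 / c2) * (c2 ^+ 2 * G)
   = (c1 + c2)^+2 * G.
  rewrite !expr2. field. by rewrite c1p c2p.
exact: lexx.
Qed.


Lemma size_take_tuple (T : Type) n (t : n.+1.-tuple T) : size (take n t) == n.
Proof. by rewrite size_takel // size_tuple. Qed.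

Lemma sum_tuple_rcons (V : nmodType) (T : finType) n (F : seq T -> V) :
  \sum_(t : n.+1.-tuple T) F t = \sum_(j : T) \sum_(t : n.-tuple T) F (rcons t j).
Proof.
rewrite pair_big /=.
pose h (p : T * n.-tuple T) : n.+1.-tuple T := Tuple (rcons_tupleP p.2 p.1).
pose g (t : n.+1.-tuple T) : T * n.-tuple T := (tnth t ord_max, Tuple (size_take_tuple t)).
rewrite (reindex h) /=; last first.
  exists g => [[x t] _ | t _].
    rewrite /g /h /=; congr pair.
      by rewrite (tnth_nth x) /= nth_rcons size_tuple ltnn eqxx.
    by apply: val_inj => /=; rewrite -cats1 take_size_cat // size_tuple.
  apply: val_inj => /=.
  rewrite (tnth_nth (tnth t ord_max)) /= -take_nth ?size_tuple //.
  by rewrite take_oversize // size_tuple.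
by apply: eq_bigr => -[x t].
Qed.

Lemma layer_rcons (R : realType) (d : nat) n (h : vec R d) :
  layer n.+1 h = \sum_(j < d) layer n (fun u => h (rcons u j)).
Proof. rewrite /layer. have := (sum_tuple_rcons (V := R) (T := 'I_d) n (fun w : word d => normsq (h w))). by move=> ->. Qed.

Lemma partialS (R : realType) (d : nat) M (f : vec R d) :
  partial M.+1 f = partial M f + layer M f.
Proof. by rewrite /partial big_ord_recr. Qed.

Lemma partial0 (R : realType) (d : nat) (f : vec R d) : partial 0 f = 0.
Proof. by rewrite /partial big_ord0. Qed.

Lemma partial_mono (R : realType) (d : nat) M M' (f : vec R d) :
  (M <= M')%N -> partial M f <= partial M' f.
Proof.
move=> /subnK <-; elim: (M' - M)%N => [|k IH]; first by rewrite add0n.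
by rewrite addSn partialS; apply: le_trans IH _; rewrite lerDl layer_ge0.
Qed.

Lemma layer_le_partial (R : realType) (d : nat) n M (f : vec R d) :
  (n < M)%N -> layer n f <= partial M f.
Proof.
move=> h; apply: le_trans (partial_mono f h); rewrite partialS lerDr partial_ge0 //.
Qed.

Lemma layer0_eq0 (R : realType) (d : nat) (h : vec R d) : h [::] = 0 -> layer 0 h = 0.
Proof.
move=> h0; rewrite /layer big1 // => t _.
have -> : tval t = [::] by apply/nilP; rewrite /nilp size_tuple.
by rewrite h0 normsq0.
Qed.

Lemma partial_rcons (R : realType) (d : nat) M (h : vec R d) :
  partial M.+1 h = layer 0 h + \sum_(j < d) partial M (fun u => h (rcons u j)).
Proof.
rewrite /partial big_ord_recl /=; congr (_ + _).
rewrite exchange_big /=; apply: eq_bigr => n _; exact: layer_rcons.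
Qed.

Lemma normsq_le_layer (R : realType) (d : nat) (f : vec R d) (w : word d) :
  normsq (f w) <= layer (size w) f.
Proof.
rewrite /layer (bigD1 (Tuple (eqxx (size w)))) //= lerDl.
apply: sumr_ge0 => t _; exact: normsq_ge0.
Qed.

Lemma normsq_le_partial (R : realType) (d : nat) M (f : vec R d) (w : word d) :
  (size w < M)%N -> normsq (f w) <= partial M f.
Proof. move=> h; apply: le_trans (normsq_le_layer f w) (layer_le_partial f h). Qed.

Lemma partial_le_ext (R : realType) (d : nat) M (f g : vec R d) :
  (forall w, normsq (f w) <= normsq (g w)) -> partial M f <= partial M g.
Proof.
move=> h; apply: ler_sum => n _; apply: ler_sum => t _; exact: h.
Qed.

Lemma partial_eq_ext (R : realType) (d : nat) M (f g : vec R d) :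
  (forall w, normsq (f w) = normsq (g w)) -> partial M f = partial M g.
Proof.
move=> h; apply: eq_bigr => n _; apply: eq_bigr => t _; exact: h.
Qed.

Definition Pl (R : realType) (d : nat) (n : nat) (g : vec R d) : vec R d :=
  fun u => if size u == n then g u else 0.

Lemma layer_Pl (R : realType) (d : nat) k n (g : vec R d) :
  layer k (Pl n g) = if k == n then layer n g else 0.
Proof.
rewrite /layer /Pl; case: eqP => [->|ne].
  by apply: eq_bigr => t _; rewrite size_tuple eqxx.
by rewrite big1 // => t _; rewrite size_tuple; case: eqP => // _; rewrite normsq0.
Qed.

Lemma partial_Pl (R : realType) (d : nat) M n (g : vec R d) :
  partial M (Pl n g) = if (n < M)%N then layer n g else 0.
Proof.
elim: M => [|M IH]; first by rewrite partial0.
rewrite partialS IH layer_Pl.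
case: (ltngtP n M) => h.
- by rewrite addr0 ltnS ltnW.
- by rewrite ltnS leqNgt h addr0.
- by rewrite ?h ltnSn add0r.
Qed.

Lemma partial_fin (R : realType) (d : nat) K N (f : vec R d) :
  (forall w, (K <= size w)%N -> f w = 0) -> partial N f <= partial K f.
Proof.
move=> h.
have e : forall N0, partial N0 f = partial (minn N0 K) f.
  elim=> [|N0 IH]; first by rewrite min0n.
  case: (leqP K N0) => hK.
    rewrite partialS IH /layer big1 ?addr0; last first.
      by move=> t _; rewrite h ?normsq0 // size_tuple.
    by rewrite !(minn_idPr _) // ltnW.
  by rewrite !(minn_idPl _) ?partialS // ltnW.
rewrite e; apply: partial_mono; exact: geq_minr.
Qed.

Lemma l2_fin (R : realType) (d : nat) K (f : vec R d) :
  (forall w, (K <= size w)%N -> f w = 0) -> is_l2 f.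
Proof. move=> h; exists (partial K f) => N; exact: partial_fin. Qed.

Lemma l2_dom (R : realType) (d : nat) (f g : vec R d) :
  (forall w, normsq (f w) <= normsq (g w)) -> is_l2 g -> is_l2 f.
Proof.
move=> h [M hM]; exists M => N; apply: le_trans (hM N); exact: partial_le_ext.
Qed.

Lemma l2_Pl (R : realType) (d : nat) n (g : vec R d) : is_l2 (Pl n g).
Proof.
apply: (@l2_fin _ _ n.+1) => w hw; rewrite /Pl; case: eqP => // e.
by move: hw; rewrite e ltnn.
Qed.

Lemma in_layer_Pl (R : realType) (d : nat) n (g : vec R d) : in_layer n (Pl n g).
Proof. by move=> w; rewrite /Pl => /negbTE ->. Qed.

Lemma sqbound_Pl (R : realType) (d : nat) n (g : vec R d) : sqbound (Pl n g) (layer n g).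
Proof. move=> N; rewrite partial_Pl; case: ifP => _; [exact: lexx | exact: layer_ge0]. Qed.


Definition delta (R : realType) (d : nat) (v : word d) : vec R d :=
  fun u => if u == v then 1 else 0.

Definition Tk (R : realType) (d : nat) (T : op R d) (w v : word d) : C R :=
  T (delta R v) w.

Definition bandb (R : realType) (d : nat) (T : op R d) (b : nat) : Prop :=
  forall n f, is_l2 f -> in_layer n f ->
    forall w, ((size w + b < n) || (n + b < size w))%N -> T f w = 0.

Lemma l2_0 (R : realType) (d : nat) : is_l2 (fun _ : word d => 0 : C R).
Proof. by apply: (@l2_fin _ _ 0). Qed.

Lemma T0 (R : realType) (d : nat) (T : op R d) :
  bounded_op T -> T (fun _ => 0) = fun _ => 0.
Proof.
case=> _ [hl _].
have := hl 1 _ _ (l2_0 R d) (l2_0 R d).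
have -> : (fun w : word d => 1 * (0 : C R) + 0) = fun _ => 0.
  by apply: functional_extensionality => w; rewrite mulr0 addr0.
move=> e; apply: functional_extensionality => w.
have h := congr1 (fun F => F w) e; simpl in h; rewrite mul1r in h.
have : T (fun _ => 0) w + T (fun _ => 0) w - T (fun _ => 0) w
   = T (fun _ => 0) w - T (fun _ => 0) w by rewrite -h.
by rewrite addrK subrr.
Qed.

Lemma lin_sum (R : realType) (d : nat) (T : op R d) (I : Type) K
  (s : seq I) (a : I -> C R) (phi : I -> vec R d) :
  bounded_op T -> (forall i w, (K <= size w)%N -> phi i w = 0) ->
  T (fun u => \sum_(i <- s) a i * phi i u) = fun x => \sum_(i <- s) a i * T (phi i) x.
Proof.
move=> hT hK; elim: s => [|i s IH].
  have -> : (fun u : word d => \sum_(i <- [::]) a i * phi i u) = fun _ => 0.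
    by apply: functional_extensionality => w; rewrite big_nil.
  rewrite T0 //; apply: functional_extensionality => w; by rewrite big_nil.
have l2i : is_l2 (phi i) by apply: (@l2_fin _ _ K) => w hw; apply: hK.
have l2s : is_l2 (fun u => \sum_(j <- s) a j * phi j u).
  apply: (@l2_fin _ _ K) => w hw /=; apply: big1 => j _; by rewrite hK ?mulr0.
have -> : (fun u => \sum_(j <- i :: s) a j * phi j u) =
          (fun u => a i * phi i u + (fun u => \sum_(j <- s) a j * phi j u) u).
  by apply: functional_extensionality => w; rewrite big_cons.
case: hT => _ [hl _]; rewrite (hl _ _ _ l2i l2s) IH.
by apply: functional_extensionality => w; rewrite big_cons.
Qed.

Lemma Pl_delta (R : realType) (d : nat) n (g : vec R d) :
  Pl n g = fun u => \sum_(t : n.-tuple 'I_d) g t * delta R t u.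
Proof.
apply: functional_extensionality => u /=; rewrite /Pl /delta.
case: eqP => [hu|hu].
  rewrite (bigD1 (Tuple (introT eqP hu))) //= eqxx mulr1 big1 ?addr0 // => t ht.
  case: eqP => e; last by rewrite mulr0.
  have et : t = Tuple (introT eqP hu) by apply: val_inj; rewrite /= e.
  by rewrite et eqxx in ht.
symmetry; apply: big1 => t _; case: eqP => e; last by rewrite mulr0.
by move: hu; rewrite e size_tuple.
Qed.

Lemma T_Pl (R : realType) (d : nat) (T : op R d) n (g : vec R d) x :
  bounded_op T -> T (Pl n g) x = \sum_(t : n.-tuple 'I_d) g t * Tk T x t.
Proof.
move=> hT; rewrite Pl_delta (lin_sum (K := n.+1)) //.
move=> t w hw; rewrite /delta; case: eqP => // e.
by move: hw; rewrite e size_tuple ltnn.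
Qed.

Lemma T_fin (R : realType) (d : nat) (T : op R d) K (f : vec R d) x :
  bounded_op T -> (forall w, (K <= size w)%N -> f w = 0) ->
  T f x = \sum_(n < K) T (Pl n f) x.
Proof.
move=> hT hK.
have e : f = fun u => \sum_(n < K) 1 * Pl n f u.
  apply: functional_extensionality => u /=; rewrite /Pl.
  case: (ltnP (size u) K) => hu.
    rewrite (bigD1 (Ordinal hu)) //= eqxx mul1r big1 ?addr0 // => n hn.
    case: eqP => e; last by rewrite mulr0.
    have et : n = Ordinal hu by apply: val_inj; rewrite /= e.
    by rewrite et eqxx in hn.
  rewrite hK //; symmetry; apply: big1 => n _; case: eqP => e; last by rewrite mulr0.
  by move: (ltn_ord n); rewrite -e ltnNge hu.
rewrite {1}e (lin_sum (K := K)) //; last first.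
  by move=> n w hw; rewrite /Pl; case: eqP => // e'; move: (ltn_ord n); rewrite -e' ltnNge hw.
by apply: eq_bigr => n _; rewrite mul1r.
Qed.

Lemma sqbound_ge0 (R : realType) (d : nat) (f : vec R d) B : sqbound f B -> 0 <= B.
Proof. by move=> /(_ 0%N); rewrite partial0. Qed.

Lemma no_shrink (R : realType) (d : nat) (f : vec R d) (beta : R) :
  0 < beta -> is_l2 f -> (forall B, sqbound f B -> sqbound f (B - beta)) -> False.
Proof.
move=> bp [B hB] hs.
have hk : forall k : nat, sqbound f (B - k%:R * beta).
  elim=> [|k IH]; first by rewrite mul0r subr0.
  have := hs _ IH; congr sqbound; rewrite mulrSr; ring.
have B0 : 0 <= B / beta by rewrite divr_ge0 // ?(sqbound_ge0 hB) // ltW.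
have := archi_boundP B0; set k := Num.Def.archi_bound _ => hlt.
have := sqbound_ge0 (hk k); rewrite subr_ge0 => hle.
have : B / beta * beta < k%:R * beta by rewrite ltr_pM2r.
rewrite divfK ?gt_eqF // => h2.
by move: (lt_le_trans h2 hle); rewrite ltxx.
Qed.

Definition tailv (R : realType) (d : nat) (M : nat) (f : vec R d) : vec R d :=
  fun u => if (M <= size u)%N then f u else 0.

Lemma layer_tailv (R : realType) (d : nat) M n (f : vec R d) :
  layer n (tailv M f) = if (M <= n)%N then layer n f else 0.
Proof.
rewrite /layer /tailv; case: ifP => h.
  by apply: eq_bigr => t _; rewrite size_tuple h.
by rewrite big1 // => t _; rewrite size_tuple h normsq0.
Qed.

Lemma partial_tailv (R : realType) (d : nat) M N (f : vec R d) :
  partial N (tailv M f) + partial M f = partial (maxn N M) f.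
Proof.
elim: N => [|N IH]; first by rewrite partial0 add0r max0n.
rewrite partialS layer_tailv; case: (leqP M N) => h.
  rewrite (maxn_idPl _) ?(leqW h) //.
  by rewrite partialS; move: IH; rewrite (maxn_idPl h) => <-; ring.
by rewrite addr0 IH !(maxn_idPr _) // ltnW.
Qed.

Lemma sqbound_tailv (R : realType) (d : nat) M (f : vec R d) B :
  sqbound f B -> sqbound (tailv M f) (B - partial M f).
Proof.
move=> hB N; rewrite lerBrDr partial_tailv; exact: hB.
Qed.

Lemma T_tail0 (R : realType) (d : nat) (T : op R d) b (f : vec R d) (x : word d) :
  bounded_op T -> bandb T b -> is_l2 f ->
  T (tailv (size x + b + 1) f) x = 0.
Proof.
move=> hT hb hf; set K := (size x + b + 1)%N.
have l2t : forall M, is_l2 (tailv M f).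
  move=> M; apply: l2_dom hf => w; rewrite /tailv; case: ifP => _;
    [exact: lexx | rewrite normsq0; exact: normsq_ge0].
have hM : forall M, (K <= M)%N -> T (tailv K f) x = T (tailv M f) x.
  move=> M hKM.
  pose mid : vec R d := fun u => if (K <= size u < M)%N then f u else 0.
  have e : tailv K f = fun u => 1 * mid u + tailv M f u.
    apply: functional_extensionality => u /=; rewrite /tailv /mid mul1r.
    case: (leqP M (size u)) => h1.
      by rewrite (leq_trans hKM h1) /= ?ltnNge ?h1 ?andbF ?add0r.
    by rewrite andbT addr0.
  have l2m : is_l2 mid.
    apply: (@l2_fin _ _ M) => w hw; rewrite /mid ltnNge hw andbF //.
  case: (hT) => _ [hl _]; rewrite e (hl _ _ _ l2m (l2t M)) mul1r.
  rewrite (T_fin (K := M)) //; last by move=> w hw; rewrite /mid ltnNge hw andbF.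
  rewrite big1 ?add0r // => n _.
  case: (ltnP n K) => hn.
    have -> : Pl n mid = fun _ => 0.
      apply: functional_extensionality => u; rewrite /Pl /mid.
      case: eqP => // ->; by rewrite leqNgt hn.
    by rewrite T0.
  apply: (hb n) => //; [exact: l2_Pl | exact: in_layer_Pl |].
  by apply/orP; left; move: hn; rewrite /K addn1.
case: (hT) => _ [_ [c hc]].
set y := T (tailv K f) x.
have [y0|yn] := eqVneq y 0; first by [].
have al : 0 < normsq y.
  rewrite lt_def normsq_ge0 andbT; apply/eqP => h; move/eqP: yn; apply; exact: normsq_eq0.
have bnd : forall B, sqbound f B -> forall M, (K <= M)%N ->
    normsq y <= c * (B - partial M f).
  move=> B hB M hKM.
  have := hc _ (l2t M) _ (sqbound_tailv M hB) (size x).+1.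
  apply: le_trans; rewrite /y (hM M hKM); exact: normsq_le_partial.
have cp : 0 < c.
  case: (hf) => B hB; have := bnd B hB K (leqnn K).
  have := sqbound_ge0 (sqbound_tailv K hB) => h1 h2.
  rewrite ltNge; apply/negP => hc0.
  have : c * (B - partial K f) <= 0 by rewrite mulr_le0_ge0.
  move=> h3; move: (le_trans h2 h3); rewrite leNgt al //.
exfalso; apply: (@no_shrink _ _ f (normsq y / c)) => //.
  by rewrite divr_gt0.
move=> B hB N.
have h1 := bnd B hB (maxn N K) (leq_maxr _ _).
have h2 : partial (maxn N K) f <= B - normsq y / c.
  rewrite lerBrDr -lerBrDl -(ler_pM2l cp) mulrC divfK ?gt_eqF //.
apply: le_trans (partial_mono f (leq_maxl N K)) h2.
Qed.

Lemma T_rep (R : realType) (d : nat) (T : op R d) b (f : vec R d) (x : word d) :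
  bounded_op T -> bandb T b -> is_l2 f ->
  T f x = \sum_(n < size x + b + 1) T (Pl n f) x.
Proof.
move=> hT hb hf; set K := (size x + b + 1)%N.
pose fK : vec R d := fun u => if (size u < K)%N then f u else 0.
have e : f = fun u => 1 * fK u + tailv K f u.
  apply: functional_extensionality => u /=; rewrite /fK /tailv mul1r.
  by case: ltnP => _; rewrite ?addr0 ?add0r.
have l2K : is_l2 fK by apply: (@l2_fin _ _ K) => w hw; rewrite /fK ltnNge hw.
have l2t : is_l2 (tailv K f).
  apply: l2_dom hf => w; rewrite /tailv; case: ifP => _;
    [exact: lexx | rewrite normsq0; exact: normsq_ge0].
case: (hT) => _ [hl _].
rewrite {1}e (hl _ _ _ l2K l2t) mul1r T_tail0 // addr0.
rewrite (T_fin (K := K)) //; last by move=> w hw; rewrite /fK ltnNge hw.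
apply: eq_bigr => n _; congr (T _ x); apply: functional_extensionality => u.
rewrite /Pl /fK; case: eqP => // ->; by rewrite ltn_ord.
Qed.


Definition bnd (R : realType) (d : nat) (F : vec R d -> vec R d) n (c : R) : Prop :=
  forall g M, partial M (F g) <= c^+2 * layer n g.

Definition tensF (R : realType) (d : nat) (F : vec R d -> vec R d) : vec R d -> vec R d :=
  fun g x => if x is y :: x' then F (fun u => g (rcons u (last y x'))) (belast y x') else 0.

Lemma tensF_rcons (R : realType) (d : nat) (F : vec R d -> vec R d) g x j :
  tensF F g (rcons x j) = F (fun u => g (rcons u j)) x.
Proof. by case: x => [|y x] //=; rewrite last_rcons belast_rcons. Qed.

Lemma tensF_nil (R : realType) (d : nat) (F : vec R d -> vec R d) g :
  tensF F g [::] = 0.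
Proof. by []. Qed.

Lemma bnd_ext (R : realType) (d : nat) (F F' : vec R d -> vec R d) n c :
  (forall g x, F g x = F' g x) -> bnd F n c -> bnd F' n c.
Proof.
move=> e h g M; have -> : F' g = F g by apply: functional_extensionality => x; rewrite e.
exact: h.
Qed.

Lemma bnd_zero (R : realType) (d : nat) (F : vec R d -> vec R d) n :
  (forall g x, F g x = 0) -> bnd F n 0.
Proof.
move=> e g M; rewrite expr0n /= mul0r.
rewrite /partial big1 ?lexx // => k _; rewrite /layer big1 // => t _; by rewrite e normsq0.
Qed.

Lemma bnd_tens (R : realType) (d : nat) (F : vec R d -> vec R d) n c :
  bnd F n c -> bnd (tensF F) n.+1 c.
Proof.
move=> h g [|M].
  by rewrite partial0; apply: mulr_ge0; [apply: sqr_ge0 | apply: layer_ge0].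
rewrite partial_rcons layer0_eq0 // add0r layer_rcons mulr_sumr.
apply: ler_sum => j _.
have -> : (fun u => tensF F g (rcons u j)) = F (fun u => g (rcons u j)).
  by apply: functional_extensionality => u; rewrite tensF_rcons.
exact: h.
Qed.

Lemma bnd_add (R : realType) (d : nat) (F1 F2 : vec R d -> vec R d) n c1 c2 :
  0 <= c1 -> 0 <= c2 -> bnd F1 n c1 -> bnd F2 n c2 ->
  bnd (fun g x => F1 g x + F2 g x) n (c1 + c2).
Proof.
move=> h1 h2 b1 b2 g M; apply: partial_mink; [exact: h1|exact: h2|exact: layer_ge0|exact: b1|exact: b2].
Qed.

Lemma partial_mink_sum (R : realType) (d : nat) (I : Type) (s : seq I) M
   (z : I -> vec R d) (c : I -> R) (G : R) :
  0 <= G -> (forall i, 0 <= c i) -> (forall i, partial M (z i) <= (c i)^+2 * G) ->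
  partial M (fun x => \sum_(i <- s) z i x) <= (\sum_(i <- s) c i)^+2 * G.
Proof.
move=> G0 c0 hz; elim: s => [|i s IH].
  rewrite big_nil expr0n /= mul0r; rewrite /partial big1 ?lexx // => k _.
  by rewrite /layer big1 // => t _; rewrite big_nil normsq0.
have -> : (fun x => \sum_(j <- i :: s) z j x) = fun x => z i x + (fun x => \sum_(j <- s) z j x) x.
  by apply: functional_extensionality => x; rewrite big_cons.
rewrite big_cons; apply: partial_mink => //.
by apply: sumr_ge0.
Qed.

Lemma sum_sq_le (R : realType) (I : Type) (s : seq I) (a : I -> R) :
  (forall i, 0 <= a i) -> \sum_(i <- s) a i ^+ 2 <= (\sum_(i <- s) a i)^+2.
Proof.
move=> h; elim: s => [|i s IH]; first by rewrite !big_nil expr0n.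
rewrite !big_cons.
have hs : 0 <= \sum_(j <- s) a j by apply: sumr_ge0.
have := h i => hi.
have : 0 <= 2 * a i * \sum_(j <- s) a j by apply: mulr_ge0 => //; apply: mulr_ge0.
rewrite !expr2 in IH *; nra.
Qed.


Lemma sum_if_eq (V : nmodType) (I : finType) (i0 : I) (F : I -> V) :
  \sum_(j : I) (if i0 == j then F j else 0) = F i0.
Proof.
rewrite (bigD1 i0) //= eqxx big1 ?addr0 // => j hj.
by rewrite eq_sym (negbTE hj).
Qed.

Lemma commE (R : realType) (d : nat) (T A : op R d) f w :
  commutator T A f w = T (A f) w - A (T f) w.
Proof. by []. Qed.

Lemma Rcr_rcons (R : realType) (d : nat) (j j' : 'I_d) (v : vec R d) u :
  Rcr j v (rcons u j') = if j' == j then v u else 0.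
Proof. by case: u => [|y u] //=; rewrite last_rcons belast_rcons. Qed.

Definition Dop (R : realType) (d : nat) (T : op R d) N : vec R d -> vec R d :=
  fun g x => T (Pl N.+1 g) x - tensF (fun g => T (Pl N g)) g x.

Lemma Pl_rcons (R : realType) (d : nat) N (g : vec R d) (j : 'I_d) :
  (fun u => Pl N.+1 g (rcons u j)) = Pl N (fun u => g (rcons u j)).
Proof.
apply: functional_extensionality => u; by rewrite /Pl size_rcons eqSS.
Qed.

Lemma D1_bnd (R : realType) (d : nat) (T : op R d) b N (c : 'I_d -> R) :
  bounded_op T -> bandb T b -> (b < N.+1)%N -> (forall j, 0 <= c j) ->
  (forall j f, is_l2 f -> in_layer N.+1 f ->
       normsq_le (commutator T (Rcr_adj j) f) f (c j ^+ 2)) ->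
  bnd (Dop T N) N.+1 (\sum_j c j).
Proof.
move=> hT hb hbN c0 hc g [|M].
  by rewrite partial0; apply: mulr_ge0; [apply: sqr_ge0 | apply: layer_ge0].
rewrite partial_rcons layer0_eq0; last first.
  rewrite /Dop tensF_nil subr0; apply: (hb N.+1); [exact: l2_Pl|exact: in_layer_Pl|by rewrite /= add0n hbN].
rewrite add0r.
apply: le_trans (_ : \sum_j c j ^+2 * layer N.+1 g <= _); last first.
  rewrite -mulr_suml; apply: ler_wpM2r; [exact: layer_ge0 | exact: sum_sq_le].
apply: ler_sum => j _.
have e : partial M (fun u => Dop T N g (rcons u j)) =
         partial M (commutator T (Rcr_adj j) (Pl N.+1 g)).
  apply: partial_eq_ext => u; rewrite commE /Dop tensF_rcons normsqB.
  by rewrite /Rcr_adj Pl_rcons.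
rewrite e; exact: (hc j (Pl N.+1 g) (l2_Pl _ _) (in_layer_Pl _) _ (sqbound_Pl _ _) M).
Qed.

Lemma D2_eq (R : realType) (d : nat) (T : op R d) N (g : vec R d) x :
  bounded_op T ->
  Dop T N g x = \sum_(j < d) commutator T (Rcr j) (Pl N (fun u => g (rcons u j))) x.
Proof.
move=> hT.
have ea : Pl N.+1 g = fun u => \sum_(j < d) 1 * Rcr j (Pl N (fun u => g (rcons u j))) u.
  apply: functional_extensionality => u.
  case: (lastP u) => [|u' j'].
    by rewrite /Pl /= big1 // => j _; rewrite mulr0.
  under eq_bigr => j _ do rewrite mul1r Rcr_rcons.
  rewrite sum_if_eq; have := congr1 (fun F => F u') (Pl_rcons N g j'); exact.
have eb : T (Pl N.+1 g) x = \sum_(j < d) T (Rcr j (Pl N (fun u => g (rcons u j)))) x.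
  rewrite ea (lin_sum (K := N.+2)) //; first by under eq_bigr => j _ do rewrite mul1r.
  move=> j w; case: (lastP w) => [|w' j'] //; rewrite size_rcons ltnS Rcr_rcons => h.
  case: eqP => // _; rewrite /Pl; case: eqP => // e; by move: h; rewrite e ltnn.
have ec : tensF (fun g => T (Pl N g)) g x =
          \sum_(j < d) Rcr j (T (Pl N (fun u => g (rcons u j)))) x.
  case: (lastP x) => [|x' j'].
    by rewrite tensF_nil big1.
  rewrite tensF_rcons; under eq_bigr => j _ do rewrite Rcr_rcons.
  by rewrite sum_if_eq.
rewrite /Dop eb ec -sumrB; apply: eq_bigr => j _; by rewrite commE.
Qed.

Lemma D2_bnd (R : realType) (d : nat) (T : op R d) N (c : 'I_d -> R) :
  bounded_op T -> (forall j, 0 <= c j) ->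
  (forall j f, is_l2 f -> in_layer N f ->
       normsq_le (commutator T (Rcr j) f) f (c j ^+ 2)) ->
  bnd (Dop T N) N.+1 (\sum_j c j).
Proof.
move=> hT c0 hc g M.
have -> : Dop T N g = fun x => \sum_(j < d) commutator T (Rcr j) (Pl N (fun u => g (rcons u j))) x.
  by apply: functional_extensionality => x; rewrite D2_eq.
apply: (partial_mink_sum (I := 'I_d) _ (z := fun j => commutator T (Rcr j) (Pl N (fun u => g (rcons u j))))).
- exact: layer_ge0.
- exact: c0.
move=> j.
have hl : layer N (fun u => g (rcons u j)) <= layer N.+1 g.
  rewrite layer_rcons (bigD1 j) //= lerDl; apply: sumr_ge0 => i _; exact: layer_ge0.
apply: le_trans (hc j _ (l2_Pl _ _) (in_layer_Pl _) _ (sqbound_Pl _ _) M) _.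
apply: ler_wpM2l hl; exact: sqr_ge0.
Qed.


Definition Yop (R : realType) (d : nat) (T : op R d) (m k : nat) : vec R d -> vec R d :=
  fun g x => if (k <= size x)%N then
    \sum_(t : m.-tuple 'I_d) Tk T (take (size x - k) x) t * g (t ++ drop (size x - k) x)
  else 0.

Lemma take_rcons_le (A : Type) n (s : seq A) (a : A) :
  (n <= size s)%N -> take n (rcons s a) = take n s.
Proof. by move=> h; rewrite -cats1 takel_cat. Qed.

Lemma Y_tens (R : realType) (d : nat) (T : op R d) m k g x :
  Yop T m k.+1 g x = tensF (Yop T m k) g x.
Proof.
case: (lastP x) => [|x' j] //.
rewrite tensF_rcons /Yop size_rcons ltnS subSS.
case: ifP => // hk.
apply: eq_bigr => t _.
rewrite take_rcons_le ?leq_subr // drop_rcons ?leq_subr //.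
by rewrite rcons_cat.
Qed.

Lemma Y0 (R : realType) (d : nat) (T : op R d) m g x :
  bounded_op T -> Yop T m 0 g x = T (Pl m g) x.
Proof.
move=> hT; rewrite T_Pl // /Yop subn0 take_size drop_size.
by apply: eq_bigr => t _; rewrite cats0 mulrC.
Qed.

Definition Eop (R : realType) (d : nat) (T : op R d) (m k : nat) : vec R d -> vec R d :=
  fun g x => T (Pl (m + k) g) x - Yop T m k g x.

Lemma E_bnd (R : realType) (d : nat) (T : op R d) m (e : nat -> R) :
  bounded_op T -> (forall n, 0 <= e n) ->
  (forall N, (m <= N)%N -> bnd (Dop T N) N.+1 (e N)) ->
  forall k, bnd (Eop T m k) (m + k) (\sum_(i < k) e (m + i)%N).
Proof.
move=> hT e0 hD; elim=> [|k IH].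
  rewrite big_ord0; apply: bnd_zero => g x; rewrite /Eop addn0 Y0 // subrr //.
rewrite big_ord_recr /= addrC addnS.
have hE : forall g x, Dop T (m + k) g x + tensF (Eop T m k) g x = Eop T m k.+1 g x.
  move=> g x; rewrite /Dop /Eop Y_tens addnS.
  case: (lastP x) => [|x' j]; first by rewrite !tensF_nil; ring.
  rewrite !tensF_rcons; ring.
apply: bnd_ext hE _; apply: bnd_add.
- exact: e0.
- by apply: sumr_ge0 => i _.
- by apply: hD; rewrite leq_addr.
- exact: bnd_tens.
Qed.


Lemma sa_ext (R : realType) (d : nat) (A B : op R d) :
  star_alg_L A -> (forall f w, A f w = B f w) -> star_alg_L B.
Proof.
move=> h e; have -> : B = A; last exact: h.
apply: functional_extensionality => f; apply: functional_extensionality => w; by rewrite e.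
Qed.

Lemma sa_id (R : realType) (d : nat) (j0 : 'I_d) : star_alg_L (fun f : vec R d => f).
Proof.
apply: (sa_ext (sa_comp (sa_Ladj R j0) (sa_L R j0))) => f w; by rewrite /op_comp /Lcr_adj /Lcr eqxx.
Qed.

Lemma sa_zero (R : realType) (d : nat) (j0 : 'I_d) : star_alg_L (fun (f : vec R d) (w : word d) => 0).
Proof.
apply: (sa_ext (sa_scale 0 (sa_L R j0))) => f w; by rewrite /op_scale mul0r.
Qed.

Lemma sa_sum (R : realType) (d : nat) (j0 : 'I_d) (I : Type) (s : seq I) (F : I -> op R d) :
  (forall i, star_alg_L (F i)) -> star_alg_L (fun f w => \sum_(i <- s) F i f w).
Proof.
move=> h; elim: s => [|i s IH].
  apply: (sa_ext (@sa_zero R d j0)) => f w; by rewrite big_nil.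
apply: (sa_ext (sa_add (h i) IH)) => f w; by rewrite big_cons.
Qed.

Fixpoint Lw (R : realType) (d : nat) (w : word d) : op R d :=
  match w with [::] => fun f => f | j :: w' => op_comp (Lcr j) (Lw w') end.

Fixpoint Lwa (R : realType) (d : nat) (w : word d) : op R d :=
  match w with [::] => fun f => f | j :: w' => op_comp (Lwa w') (Lcr_adj j) end.

Lemma sa_Lw (R : realType) (d : nat) (j0 : 'I_d) w : star_alg_L (@Lw R d w).
Proof. elim: w => [|j w IH] /=; [exact: sa_id | exact: sa_comp (sa_L R j) IH]. Qed.

Lemma sa_Lwa (R : realType) (d : nat) (j0 : 'I_d) w : star_alg_L (@Lwa R d w).
Proof. elim: w => [|j w IH] /=; [exact: sa_id | exact: sa_comp IH (sa_Ladj R j)]. Qed.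

Lemma LwE (R : realType) (d : nat) (w : word d) f x :
  @Lw R d w f x = if take (size w) x == w then f (drop (size w) x) else 0.
Proof.
elim: w x => [|j w IH] x /=; first by rewrite take0 drop0.
rewrite /op_comp /Lcr; case: x => [|j' x] //=.
rewrite IH eqseq_cons; case: (j' == j) => //=.
Qed.

Lemma LwaE (R : realType) (d : nat) (v : word d) f u : @Lwa R d v f u = f (v ++ u).
Proof. by elim: v f => [|j v IH] f //=; rewrite /op_comp IH. Qed.

Definition Qop (R : realType) (d : nat) : op R d :=
  fun f x => if x is [::] then f [::] else 0.

Lemma sa_Q (R : realType) (d : nat) (j0 : 'I_d) : star_alg_L (@Qop R d).
Proof.
have h := sa_add (@sa_id R d j0) (sa_scale (-1) (sa_sum j0 (index_enum 'I_d)
             (fun j => sa_comp (sa_L R j) (sa_Ladj R j)))).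
apply: (sa_ext h) => f x; rewrite /op_add /op_scale /op_comp /Qop.
case: x => [|j' x].
  by rewrite big1 ?mulr0 ?addr0.
under eq_bigr => j _ do rewrite /Lcr /Lcr_adj.
by rewrite sum_if_eq mulN1r subrr.
Qed.


Definition Aop (R : realType) (d : nat) (T : op R d) (m b : nat) : op R d :=
  fun f x =>
  \sum_(n < m) \sum_(t : n.-tuple 'I_d) \sum_(l < m + b + 1) \sum_(w : l.-tuple 'I_d)
     Tk T w t * Lw w (@Qop R d (Lwa t f)) x
  + \sum_(t : m.-tuple 'I_d) \sum_(l < m + b + 1) \sum_(w : l.-tuple 'I_d)
     Tk T w t * Lw w (Lwa t f) x.

Lemma sa_A (R : realType) (d : nat) (j0 : 'I_d) (T : op R d) m b : star_alg_L (Aop T m b).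
Proof.
have h1 : star_alg_L (fun f x => \sum_(n < m) \sum_(t : n.-tuple 'I_d) \sum_(l < m + b + 1)
     \sum_(w : l.-tuple 'I_d) Tk T w t * Lw w (@Qop R d (Lwa t f)) x).
  apply: (sa_sum j0) => n; apply: (sa_sum j0) => t; apply: (sa_sum j0) => l; apply: (sa_sum j0) => w.
  apply: (sa_ext (sa_scale (Tk T w t) (sa_comp (@sa_Lw R d j0 w) (sa_comp (@sa_Q R d j0) (@sa_Lwa R d j0 t))))).
  by [].
have h2 : star_alg_L (fun f x => \sum_(t : m.-tuple 'I_d) \sum_(l < m + b + 1)
     \sum_(w : l.-tuple 'I_d) Tk T w t * Lw w (Lwa t f) x).
  apply: (sa_sum j0) => t; apply: (sa_sum j0) => l; apply: (sa_sum j0) => w.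
  apply: (sa_ext (sa_scale (Tk T w t) (sa_comp (@sa_Lw R d j0 w) (@sa_Lwa R d j0 t)))).
  by [].
exact: (sa_ext (sa_add h1 h2)).
Qed.

Lemma sum_tuple_if (V : nmodType) (T : finType) l (u : seq T) (F : seq T -> V) :
  \sum_(w : l.-tuple T) (if u == tval w then F w else 0) = if size u == l then F u else 0.
Proof.
case: eqP => hu.
  rewrite (bigD1 (Tuple (introT eqP hu))) //= eqxx big1 ?addr0 // => w hw.
  case: eqP => // e.
  have ew : w = Tuple (introT eqP hu) by apply: val_inj; rewrite /= e.
  by rewrite ew eqxx in hw.
apply: big1 => w _; case: eqP => // e; by move: hu; rewrite e size_tuple.
Qed.

Lemma sum_ord_if (V : nmodType) B k (G : V) :
  \sum_(l < B) (if (l == k :> nat) then G else 0) = if (k < B)%N then G else 0.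
Proof.
case: ltnP => hk.
  rewrite (bigD1 (Ordinal hk)) //= eqxx big1 ?addr0 // => l hl.
  case: eqP => // e.
  have el : l = Ordinal hk by apply: val_inj; rewrite /= e.
  by rewrite el eqxx in hl.
apply: big1 => l _; have : (l : nat) != k.
  by apply/eqP => e; move: (ltn_ord l); rewrite e ltnNge hk.
by move/negbTE ->.
Qed.

Lemma Tk_band (R : realType) (d : nat) (T : op R d) b (w t : word d) :
  bandb T b -> ((size w + b < size t) || (size t + b < size w))%N -> Tk T w t = 0.
Proof.
move=> hb h; apply: (hb (size t)) => //.
  apply: (@l2_fin _ _ (size t).+1) => u hu; rewrite /delta; case: eqP => // e.
  by move: hu; rewrite e ltnn.
by move=> u hu; rewrite /delta; case: eqP => // e; move: hu; rewrite e eqxx.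
Qed.

Lemma A_part1 (R : realType) (d : nat) (T : op R d) m b n (t : n.-tuple 'I_d) f x :
  bandb T b -> (n < m)%N ->
  \sum_(l < m + b + 1) \sum_(w : l.-tuple 'I_d) Tk T w t * Lw w (@Qop R d (Lwa t f)) x
  = Tk T x t * f t.
Proof.
move=> hb hn.
have e1 : forall l : 'I_(m + b + 1),
  \sum_(w : l.-tuple 'I_d) Tk T w t * Lw w (@Qop R d (Lwa t f)) x
  = if (l == size x :> nat) then Tk T x t * f t else 0.
  move=> l.
  under eq_bigr => w _ do rewrite LwE size_tuple (fun_if (fun z => Tk T w t * z)) mulr0.
  rewrite (@sum_tuple_if _ _ l (take l x) (fun w => Tk T w t * Qop (Lwa t f) (drop l x))).
  rewrite size_take; case: (ltngtP l (size x)) => h.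
  - rewrite ?eqxx ?(ltn_eqF h); case E: (drop l x) => [|y s]; last by rewrite /Qop mulr0.
    by move: (congr1 size E); rewrite size_drop /= => /eqP; rewrite subn_eq0 leqNgt h.
  - by rewrite (ltn_eqF h).
  - by rewrite ?h eqxx take_size drop_size /Qop LwaE cats0.
rewrite (eq_bigr _ (fun l _ => e1 l)) sum_ord_if; case: ltnP => // hx.
rewrite (Tk_band hb) ?mul0r //; apply/orP; right; rewrite size_tuple.
move: hx hn; clear; lia.
Qed.

Lemma size_take_eq (T : Type) l (x : seq T) : (size (take l x) == l) = (l <= size x)%N.
Proof.
rewrite size_take; case: (ltngtP l (size x)) => h.
- by rewrite eqxx ?ltnW.
- by rewrite ?(ltn_eqF h) ?leqNgt ?h.
- by rewrite ?h eqxx ?leqnn.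
Qed.

Lemma sum_ord_cut (V : nmodType) N1 N2 (G : nat -> V) :
  (N1 <= N2)%N -> (forall l, (N1 <= l)%N -> (l < N2)%N -> G l = 0) ->
  \sum_(l < N2) G l = \sum_(l < N1) G l.
Proof.
move=> h hz; rewrite -(subnKC h) big_split_ord /=.
rewrite [X in _ + X = _]big1 ?addr0 // => i _.
apply: hz; [exact: leq_addr | move: (ltn_ord i); clear; lia].
Qed.

Lemma A_eval (R : realType) (d : nat) (T : op R d) m b f x :
  bounded_op T -> bandb T b ->
  Aop T m b f x = \sum_(n < m) T (Pl n f) x + \sum_(k < size x + 1) Yop T m k f x.
Proof.
move=> hT hb; rewrite /Aop; congr (_ + _).
  apply: eq_bigr => n _; rewrite T_Pl //.
  by apply: eq_bigr => t _; rewrite A_part1 // mulrC.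
pose G (l : nat) := if (l <= size x)%N then
   \sum_(t : m.-tuple 'I_d) Tk T (take l x) t * f (t ++ drop l x) else 0.
have e1 : forall (t : m.-tuple 'I_d) (l : nat),
  \sum_(w : l.-tuple 'I_d) Tk T w t * Lw w (Lwa t f) x
  = if (l <= size x)%N then Tk T (take l x) t * f (t ++ drop l x) else 0.
  move=> t l.
  under eq_bigr => w _ do rewrite LwE size_tuple (fun_if (fun z => Tk T w t * z)) mulr0.
  rewrite (@sum_tuple_if _ _ l (take l x) (fun w => Tk T w t * Lwa t f (drop l x))).
  by rewrite size_take_eq LwaE.
under eq_bigr => t _ do under eq_bigr => l _ do rewrite e1.
rewrite exchange_big /=.
have e2 : forall l : 'I_(m + b + 1), \sum_(t : m.-tuple 'I_d)
   (if (l <= size x)%N then Tk T (take l x) t * f (t ++ drop l x) else 0) = G l.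
  move=> l; rewrite /G; case: ifP => // _; exact: big1.
rewrite (eq_bigr _ (fun l _ => e2 l)).
have Gz : forall l, (minn (m + b + 1) (size x + 1) <= l)%N -> G l = 0.
  move=> l; rewrite geq_min => /orP[h|h]; rewrite /G; case: ifP => // hl.
    apply: big1 => t _; rewrite (Tk_band hb) ?mul0r //; apply/orP; right.
    rewrite size_tuple size_takel //; move: h; clear; lia.
  by move: h hl; clear; lia.
rewrite (@sum_ord_cut _ (minn (m + b + 1) (size x + 1)) (m + b + 1) G) ?geq_minl //;
  last by move=> l hl _; apply: Gz.
rewrite -(@sum_ord_cut _ (minn (m + b + 1) (size x + 1)) (size x + 1) G) ?geq_minr //;
  last by move=> l hl _; apply: Gz.
rewrite (reindex_inj rev_ord_inj) /=; apply: eq_bigr => k _.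
have hk : (size x + 1 - k.+1 = size x - k)%N by move: (ltn_ord k); clear; lia.
rewrite /Yop /G hk leq_subr.
have -> : (k <= size x)%N by rewrite -ltnS -(addn1 (size x)) ltn_ord.
by [].
Qed.


Lemma TA_diff (R : realType) (d : nat) (T : op R d) m b f x :
  bounded_op T -> bandb T b -> is_l2 f ->
  T f x - Aop T m b f x = \sum_(k < size x + b + 1) Eop T m k f x.
Proof.
move=> hT hb hf.
rewrite (T_rep x hT hb hf) A_eval //.
rewrite -(@sum_ord_cut _ (size x + b + 1) (m + (size x + b + 1)) (fun n => T (Pl n f) x));
  [| exact: leq_addl |]; last first.
  move=> l hl _; apply: (hb l); [exact: l2_Pl | exact: in_layer_Pl |].
  by apply/orP; left; move: hl; clear; lia.
rewrite big_split_ord /=.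
rewrite -(@sum_ord_cut _ (size x + 1) (size x + b + 1) (fun k => Yop T m k f x));
  [| by rewrite leq_add2r leq_addr |]; last first.
  by move=> l hl _; rewrite /Yop; case: ifP => // h; move: hl h; clear; lia.
rewrite opprD addrACA.
have -> : \sum_(i < m) T (Pl (lshift (size x + b + 1) i) f) x - \sum_(n < m) T (Pl n f) x = 0.
  by apply/eqP; rewrite subr_eq0; apply/eqP; apply: eq_bigr.
by rewrite add0r -sumrB; apply: eq_bigr => k _; rewrite /Eop.
Qed.

Lemma E_window (R : realType) (d : nat) (T : op R d) m b k f x :
  bounded_op T -> bandb T b ->
  ((m + k + b < size x) || (size x + b < m + k))%N -> Eop T m k f x = 0.
Proof.
move=> hT hb h; rewrite /Eop.
rewrite (hb (m + k)) ?sub0r; last 3 first.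
- exact: l2_Pl.
- exact: in_layer_Pl.
- by move: h; clear; case/orP => h; apply/orP; [right | left]; lia.
rewrite /Yop; case: ifP => hk; last by rewrite oppr0.
rewrite big1 ?oppr0 // => t _; rewrite (Tk_band hb) ?mul0r //.
rewrite size_tuple size_takel ?leq_subr //.
by move: h hk; clear; case/orP => h hk; apply/orP; [right | left]; lia.
Qed.

Lemma sum_nat_zero_out (V : nmodType) lo hi R0 (a : nat -> V) :
  (lo <= hi)%N -> (hi <= R0)%N ->
  (forall k, (k < lo)%N -> a k = 0) -> (forall k, (hi <= k)%N -> a k = 0) ->
  \sum_(k < R0) a k = \sum_(lo <= k < hi) a k.
Proof.
move=> h1 h2 z1 z2.
rewrite -(big_mkord xpredT a) (big_cat_nat (leq0n lo) (leq_trans h1 h2)) /=.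
rewrite (big_cat_nat h1 h2) /=.
rewrite [X in X + _]big1_seq ?add0r; last first.
  by move=> k /andP[_]; rewrite mem_index_iota => /andP[_ hk]; apply: z1.
rewrite [X in _ + X]big1_seq ?addr0 // => k /andP[_]; rewrite mem_index_iota => /andP[hk _].
exact: z2.
Qed.

Lemma sum_nat_le_ext (R : realType) lo hi R0 (a : nat -> R) :
  (lo <= hi)%N -> (hi <= R0)%N -> (forall k, 0 <= a k) ->
  \sum_(lo <= k < hi) a k <= \sum_(k < R0) a k.
Proof.
move=> h1 h2 a0.
rewrite -(big_mkord xpredT a) (big_cat_nat (leq0n lo) (leq_trans h1 h2)) /=.
rewrite (big_cat_nat h1 h2) /= addrC -addrA lerDl.
apply: addr_ge0; apply: sumr_ge0 => k _; exact: a0.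
Qed.

Lemma window_bound (R : realType) lo hi R0 (a : nat -> C R) :
  (lo <= hi)%N -> (hi <= R0)%N ->
  (forall k, (k < lo)%N -> a k = 0) -> (forall k, (hi <= k)%N -> a k = 0) ->
  normsq (\sum_(k < R0) a k) <= (hi - lo)%:R * \sum_(k < R0) normsq (a k).
Proof.
move=> h1 h2 z1 z2; rewrite (sum_nat_zero_out h1 h2 z1 z2).
apply: le_trans (normsq_sum_le _ _) _.
rewrite size_iota; apply: ler_wpM2l; first exact: ler0n.
apply: sum_nat_le_ext => // k; exact: normsq_ge0.
Qed.

Lemma layer_shift_le (R : realType) (d : nat) m K (f : vec R d) :
  \sum_(k < K) layer (m + k) f <= partial (m + K) f.
Proof.
rewrite /partial big_split_ord /= lerDr; apply: sumr_ge0 => n _; exact: layer_ge0.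
Qed.

Lemma final_est (R : realType) (d : nat) (T : op R d) m b (dl : R) f B0 :
  bounded_op T -> bandb T b -> 0 <= dl ->
  (forall k, bnd (Eop T m k) (m + k) dl) -> is_l2 f -> sqbound f B0 ->
  sqbound (op_sub T (Aop T m b) f) ((2 * b + 1)%:R * dl^+2 * B0).
Proof.
move=> hT hb dl0 hE hf hB M.
set c := ((2 * b + 1)%:R : R).
have c0 : 0 <= c by exact: ler0n.
have step1 : forall x : word d, (size x < M)%N ->
   normsq (op_sub T (Aop T m b) f x) <= c * \sum_(k < M + b + 1) normsq (Eop T m k f x).
  move=> x hx; rewrite /op_sub TA_diff //.
  have hw := @window_bound R (size x - b - m) (size x + b + 1 - m) (size x + b + 1)
     (fun k => Eop T m k f x).
  have S0 : 0 <= \sum_(k < size x + b + 1) normsq (Eop T m k f x).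
    by apply: sumr_ge0 => k _; exact: normsq_ge0.
  apply: le_trans (hw _ _ _ _) _.
  - by clear; lia.
  - by clear; lia.
  - move=> k hk; apply: (E_window _ hT hb); apply/orP; left; move: hk; clear; lia.
  - move=> k hk; apply: (E_window _ hT hb); apply/orP; right; move: hk; clear; lia.
  apply: le_trans (ler_wpM2r S0 (_ : _ <= c)) _.
    by rewrite /c ler_nat; clear; lia.
  apply: (@ler_wpM2l _ c) => //.
  have := @sum_nat_le_ext R 0 (size x + b + 1) (M + b + 1) (fun k => normsq (Eop T m k f x)).
  rewrite big_mkord => h; apply: h => //; [by move: hx; clear; lia | move=> k; exact: normsq_ge0].
have step2 : partial M (op_sub T (Aop T m b) f) <=
   c * \sum_(k < M + b + 1) partial M (Eop T m k f).
  apply: le_trans (_ : \sum_(L < M) \sum_(x : L.-tuple 'I_d)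
      (c * \sum_(k < M + b + 1) normsq (Eop T m k f x)) <= _).
    apply: ler_sum => L _; apply: ler_sum => x _; apply: step1; by rewrite size_tuple.
  rewrite /partial /layer le_eqVlt; apply/orP; left; apply/eqP.
  under eq_bigr => L _ do under eq_bigr => x _ do rewrite mulr_sumr.
  under eq_bigr => L _ do rewrite exchange_big /=.
  rewrite exchange_big /= mulr_sumr; apply: eq_bigr => k _.
  rewrite mulr_sumr; apply: eq_bigr => L _; by rewrite mulr_sumr.
apply: le_trans step2 _; rewrite -mulrA; apply: (@ler_wpM2l _ c) => //.
apply: le_trans (_ : \sum_(k < M + b + 1) dl^+2 * layer (m + k) f <= _).
  apply: ler_sum => k _; exact: hE.
rewrite -mulr_sumr; apply: (@ler_wpM2l _ (dl^+2)); first exact: sqr_ge0.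
apply: le_trans (layer_shift_le _ _ _) _; exact: hB.
Qed.


Lemma bnd_mono (R : realType) (d : nat) (F : vec R d -> vec R d) n c c' :
  bnd F n c -> 0 <= c -> c <= c' -> bnd F n c'.
Proof.
move=> h c0 cc g M; apply: le_trans (h g M) _; apply: ler_wpM2r; first exact: layer_ge0.
have := c0; have := cc; rewrite !expr2 => h1 h2; nra.
Qed.

Lemma tail_small (R : realType) (e : nat -> R) K0 :
  (forall n, 0 <= e n) -> (forall N, \sum_(n < N) e n <= K0) ->
  forall dl, 0 < dl -> forall m0, exists m, (m0 <= m)%N /\ forall k, \sum_(i < k) e (m + i)%N <= dl.
Proof.
move=> e0 hK dl dl0 m0; apply: NNPP => hn.
have H : forall m, (m0 <= m)%N -> exists k, dl < \sum_(i < k) e (m + i)%N.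
  move=> m hm; apply: NNPP => h2; apply: hn; exists m; split => // k.
  rewrite leNgt; apply/negP => h3; apply: h2; by exists k.
have H2 : forall j : nat, exists N, (m0 <= N)%N /\ j%:R * dl <= \sum_(n < N) e n.
  elim=> [|j [N [hN hs]]].
    exists m0; split => //; rewrite mul0r; by apply: sumr_ge0.
  case: (H N hN) => k hk; exists (N + k)%N; split; first exact: leq_trans hN (leq_addr _ _).
  rewrite big_split_ord /= -addn1 natrD mulrDl mul1r; apply: lerD; [exact: hs | exact: ltW].
have K00 : 0 <= K0 by have := hK 0%N; rewrite big_ord0.
have B0 : 0 <= K0 / dl by rewrite divr_ge0 // ltW.
have := archi_boundP B0; set j := Num.Def.archi_bound _ => hlt.
case: (H2 j) => N [_ hs].
have : K0 / dl * dl < j%:R * dl by rewrite ltr_pM2r.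
rewrite divfK ?gt_eqF // => h3.
have := le_lt_trans (hK N) (lt_le_trans h3 hs); by rewrite ltxx.
Qed.

Lemma main_from_D (R : realType) (d : nat) (j0 : 'I_d) (T : op R d) b (e : nat -> R) K0 :
  bounded_op T -> bandb T b -> (forall n, 0 <= e n) -> (forall N, \sum_(n < N) e n <= K0) ->
  (forall N, (b < N.+1)%N -> bnd (Dop T N) N.+1 (e N)) ->
  in_Cuntz_Toeplitz T.
Proof.
move=> hT hb e0 hK hD; split => // eps eps0.
set c := ((2 * b + 1)%:R : R).
have cp : 0 < c by rewrite /c ltr0n addn1.
set dl := Num.min 1 (eps / c).
have dl0 : 0 < dl by rewrite /dl lt_min ltr01 divr_gt0.
have dl1 : dl <= 1 by rewrite /dl ge_min lexx.
have dle : dl <= eps / c by rewrite /dl ge_min lexx orbT.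
have [m [hm ht]] := tail_small e0 hK dl0 b.+1.
have hE : forall k, bnd (Eop T m k) (m + k) dl.
  move=> k; apply: bnd_mono (E_bnd hT e0 _ k) _ _ => //.
  - move=> N hN; apply: hD; move: hm hN; clear; lia.
  - by apply: sumr_ge0 => i _.
exists (Aop T m b); split; first exact: sa_A.
move=> f hf B0 hB N.
have := final_est hT hb (ltW dl0) hE hf hB N => h; apply: le_trans h _.
have B00 := sqbound_ge0 hB.
apply: ler_wpM2r => //.
have h1 : dl ^+ 2 <= dl by rewrite expr2 ler_piMr // ltW.
apply: le_trans (_ : c * dl <= _); first by apply: ler_wpM2l => //; exact: ltW.
by rewrite -ler_pdivlMl // mulrC.
Qed.

Lemma fchoice (A : finType) (B : Type) (Q : A -> B -> Prop) :
  (forall a, exists b, Q a b) -> exists f : A -> B, forall a, Q a (f a).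
Proof.
move=> h; exists (fun a => proj1_sig (constructive_indefinite_description _ (h a))).
move=> a; exact: (proj2_sig (constructive_indefinite_description _ (h a))).
Qed.

Unset Implicit Arguments.

Theorem theorem3p8 (R : realType) (d : nat) (hd : (2 <= d)%N) (T : op R d) :
  band_limited T ->
  ((forall j : 'I_d, summable_op (commutator T (@Rcr_adj R d j))) \/
   (forall j : 'I_d, summable_op (commutator T (@Rcr R d j)))) ->
  in_Cuntz_Toeplitz T.
Proof.
move=> [hT [b hb]] hc.
have j0 : 'I_d := Ordinal (leq_trans (isT : (0 < 2)%N) hd).
case: hc => hc.
- have [cf hcf] := fchoice (fun j => proj2 (hc j)).
  have [Kf hKf] := fchoice (fun j => proj1 (proj2 (hcf j))).
  apply: (@main_from_D R d j0 T b (fun N => \sum_j cf j N.+1) (\sum_j Kf j)) => //.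
  + move=> n; apply: sumr_ge0 => j _; exact: (proj1 (hcf j)).
  + move=> N; rewrite exchange_big /=; apply: ler_sum => j _.
    apply: le_trans (hKf j N.+1); rewrite big_ord_recl /= lerDr; exact: (proj1 (hcf j)).
  + move=> N hN; apply: (D1_bnd (c := fun j => cf j N.+1) hT hb hN).
    * move=> j; exact: (proj1 (hcf j)).
    * move=> j f hf hl; exact: (proj2 (proj2 (hcf j)) N.+1 f hf hl).
- have [cf hcf] := fchoice (fun j => proj2 (hc j)).
  have [Kf hKf] := fchoice (fun j => proj1 (proj2 (hcf j))).
  apply: (@main_from_D R d j0 T b (fun N => \sum_j cf j N) (\sum_j Kf j)) => //.
  + move=> n; apply: sumr_ge0 => j _; exact: (proj1 (hcf j)).
  + move=> N; rewrite exchange_big /=; apply: ler_sum => j _; exact: hKf.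
  + move=> N hN; apply: (D2_bnd (c := fun j => cf j N) hT).
    * move=> j; exact: (proj1 (hcf j)).
    * move=> j f hf hl; exact: (proj2 (proj2 (hcf j)) N f hf hl).
Qed.
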